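(* Let $(X,d)$ be an ultrametric space and $f:X\to X$ a surjective isometry. Then $(X,d,f)$ has the two-sided shadowing property.
   Context: An ultrametric space satisfies $d(x,z)\le\max\{d(x,y),d(y,z)\}$. For a bijection $f$, the two-sided shadowing property means: for every $\varepsilon>0$ there is $\delta>0$ such that for every sequence $(x_n)_{n\in\mathbb{Z}}$ with $d(f(x_n),x_{n+1})<\delta$ for all $n\in\mathbb{Z}$ there is $x\in X$ with $d(f^n(x),x_n)<\varepsilon$ for all $n\in\mathbb{Z}$ (negative powers being powers of $f^{-1}$). *)

(* Defs.v *)
From Stdlib Require Import Reals ZArith ClassicalEpsilon.
Open Scope R_scope.

Definition is_ultrametric {X : Type} (d : X -> X -> R) : Prop :=
  (forall x y, 0 <= d x y) /\
  (forall x y, d x y = 0 <-> x = y) /\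
  (forall x y, d x y = d y x) /\
  (forall x y z, d x z <= d x y + d y z) /\
  (forall x y z, d x z <= Rmax (d x y) (d y z)).

Definition isometry {X : Type} (d : X -> X -> R) (f : X -> X) : Prop :=
  forall x y, d (f x) (f y) = d x y.

Definition surjective {X : Type} (f : X -> X) : Prop :=
  forall y, exists x, f x = y.

(* A (choice-based) preimage function; it is the inverse f^{-1} whenever f is
   a bijection. *)
Definition finv {X : Type} (f : X -> X) (y : X) : X :=
  epsilon (inhabits y) (fun x => f x = y).

Definition zpow {X : Type} (f : X -> X) (n : Z) : X -> X :=
  match n with
  | Z0 => fun x => x
  | Zpos p => Nat.iter (Pos.to_nat p) f
  | Zneg p => Nat.iter (Pos.to_nat p) (finv f)
  end.

Definition two_sided_shadowing {X : Type} (d : X -> X -> R) (f : X -> X) : Prop :=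
  forall eps, 0 < eps -> exists delta, 0 < delta /\
    forall xs : Z -> X, (forall n : Z, d (f (xs n)) (xs (n + 1)%Z) < delta) ->
      exists x : X, forall n : Z, d (zpow f n x) (xs n) < eps.

(* Main.v *)
Require Import Defs.
From Stdlib Require Import Reals ZArith Lia ClassicalEpsilon.
Open Scope R_scope.

Theorem proposition5p7 (X : Type) (d : X -> X -> R) (f : X -> X) :
  is_ultrametric d -> isometry d f -> surjective f -> two_sided_shadowing d f.
Proof.
  intros [Hpos [Hzero [Hsym [Htri Hult]]]] Hiso Hsur eps Heps.
  exists eps; split; [exact Heps|].
  intros xs Hxs.
  assert (Hfinv : forall y, f (finv f y) = y).
  { intro y. unfold finv. apply epsilon_spec. apply Hsur. }
  set (x0 := xs 0%Z).
  assert (HP : forall k, d (Nat.iter k f x0) (xs (Z.of_nat k)) < eps).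
  { induction k as [|k IH].
    - simpl. unfold x0. rewrite (proj2 (Hzero _ _) eq_refl). exact Heps.
    - change (Nat.iter (S k) f x0) with (f (Nat.iter k f x0)).
      eapply Rle_lt_trans. apply (Hult _ (f (xs (Z.of_nat k)))).
      apply Rmax_lub_lt.
      + rewrite Hiso. exact IH.
      + replace (Z.of_nat (S k)) with (Z.of_nat k + 1)%Z by lia. apply Hxs. }
  assert (HN : forall k, d (Nat.iter k (finv f) x0) (xs (- Z.of_nat k)%Z) < eps).
  { induction k as [|k IH].
    - simpl. unfold x0. rewrite (proj2 (Hzero _ _) eq_refl). exact Heps.
    - change (Nat.iter (S k) (finv f) x0) with (finv f (Nat.iter k (finv f) x0)).
      rewrite <- Hiso. rewrite Hfinv.
      eapply Rle_lt_trans. apply (Hult _ (xs (- Z.of_nat k)%Z)).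
      apply Rmax_lub_lt.
      + exact IH.
      + rewrite Hsym.
        replace (- Z.of_nat k)%Z with (- Z.of_nat (S k) + 1)%Z by lia. apply Hxs. }
  exists x0. intros [|p|p]; simpl.
  - apply (HP 0%nat).
  - pose proof (HP (Pos.to_nat p)) as H. rewrite positive_nat_Z in H. exact H.
  - pose proof (HN (Pos.to_nat p)) as H. rewrite positive_nat_Z in H. exact H.
Qed.
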